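(* For every regular social purpose game $\Gamma$ and every level of cooperation $k\in\{2,\dots,n\}$, there exists at least one partial cooperative leadership equilibrium of $\Gamma$ at level $k$.
   Context: A social purpose game $\Gamma=\langle N,\overline{Q},H,(\alpha_i,h_i,g_i)_{i\in N}\rangle$ consists of a player set $N=\{1,\dots,n\}$ with $n\ge 2$, a number $\overline{Q}>0$ such that every player's strategy set is $S_i=[0,\overline{Q}]$, a function $H\colon\mathbb{R}\to\mathbb{R}$, and for each $i\in N$ a weight $\alpha_i>0$ and functions $h_i,g_i\colon[0,\overline{Q}]\to\mathbb{R}$, with players ordered so that $0<\alpha_1\le\dots\le\alpha_n$. The payoff of player $i$ at $x\in[0,\overline{Q}]^N$ is $\pi_i(x)=\alpha_i H\big(\sum_{j=1}^n h_j(x_j)\big)-g_i(x_i)$. $\Gamma$ is regular if: each $h_i$ is the identity; $H$ is continuously differentiable, increasing and concave; and each $g_i$ is continuously differentiable, increasing and convex. For a level of cooperation $k\in\{2,\dots,n\}$, let $C_k=\{n-k+1,\dots,n\}$ (cooperators) and $N_k=N\setminus C_k=\{1,\dots,n-k\}$ (non-cooperators); write profiles as $(x^{N_k},x^{C_k})$ with $x^{N_k}\in[0,\overline{Q}]^{N_k}$, $x^{C_k}\in[0,\overline{Q}]^{C_k}$. For fixed $x^{C_k}$, $\mathrm{NE}(x^{C_k})\subseteq[0,\overline{Q}]^{N_k}$ is the set of Nash equilibria of the game with player set $N_k$, strategy sets $[0,\overline{Q}]$ and payoffs $x^{N_k}\mapsto\pi_j(x^{N_k},x^{C_k})$, $j\in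 N_k$ (when $N_k=\emptyset$ this set consists of the empty profile). Define $\tilde\pi(x^{C_k})=\min_{x^{N_k}\in\mathrm{NE}(x^{C_k})}\sum_{i\in C_k}\pi_i(x^{N_k},x^{C_k})$. A partial cooperative leadership equilibrium (PCLE) at level $k$ is a profile $(x^{N_k}_*,x^{C_k}_* )$ such that $x^{C_k}_*$ maximizes $\tilde\pi$ over $[0,\overline{Q}]^{C_k}$ and $x^{N_k}_*\in\arg\min_{x^{N_k}\in\mathrm{NE}(x^{C_k}_* )}\sum_{i\in C_k}\pi_i(x^{N_k},x^{C_k}_* )$. *)

(* Defs.v *)
From Stdlib Require Import Reals Lra Lia.
Open Scope R_scope.

(* Players are indexed 0..n-1 (player i of the paper is index i-1).
   Profiles are functions nat -> R; only indices < n matter. *)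

Fixpoint sumR (n : nat) (f : nat -> R) : R :=
  match n with
  | O => 0
  | S m => sumR m f + f m
  end.

(* f has derivative l at x relative to [a,b] (one-sided at the endpoints) *)
Definition has_derivative_within (f : R -> R) (a b x l : R) : Prop :=
  forall eps, 0 < eps -> exists delta, 0 < delta /\
    forall y, a <= y <= b -> y <> x -> Rabs (y - x) < delta ->
      Rabs ((f y - f x) / (y - x) - l) < eps.

Definition continuous_within (f : R -> R) (a b x : R) : Prop :=
  forall eps, 0 < eps -> exists delta, 0 < delta /\
    forall y, a <= y <= b -> Rabs (y - x) < delta -> Rabs (f y - f x) < eps.

Definition C1_on (f : R -> R) (a b : R) : Prop :=
  exists df : R -> R,
    (forall x, a <= x <= b -> has_derivative_within f a b x (df x)) /\
    (forall x, a <= x <= b -> continuous_within df a b x).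

Definition increasing_on (f : R -> R) (a b : R) : Prop :=
  forall x y, a <= x <= b -> a <= y <= b -> x < y -> f x < f y.

Definition convex_on (f : R -> R) (a b : R) : Prop :=
  forall x y t, a <= x <= b -> a <= y <= b -> 0 <= t <= 1 ->
    f (t * x + (1 - t) * y) <= t * f x + (1 - t) * f y.

Definition C1 (f : R -> R) : Prop :=
  exists df : R -> R, (forall x, derivable_pt_lim f x (df x)) /\ continuity df.

Definition increasing (f : R -> R) : Prop := forall x y, x < y -> f x < f y.

Definition concave (f : R -> R) : Prop :=
  forall x y t, 0 <= t <= 1 -> t * f x + (1 - t) * f y <= f (t * x + (1 - t) * y).

Definition payoff (n : nat) (H : R -> R) (alpha : nat -> R)
  (h g : nat -> R -> R) (i : nat) (x : nat -> R) : R :=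
  alpha i * H (sumR n (fun j => h j (x j))) - g i (x i).

Definition regular (n : nat) (Qbar : R) (H : R -> R)
  (h g : nat -> R -> R) : Prop :=
  (forall i, (i < n)%nat -> forall t, 0 <= t <= Qbar -> h i t = t) /\
  C1 H /\ increasing H /\ concave H /\
  (forall i, (i < n)%nat ->
     C1_on (g i) 0 Qbar /\ increasing_on (g i) 0 Qbar /\ convex_on (g i) 0 Qbar).

(* At level k, non-cooperators N_k are indices i < n-k, cooperators C_k are
   indices n-k <= i < n.  The full profile (x^{N_k}, x^{C_k}): *)
Definition join (n k : nat) (xN xC : nat -> R) : nat -> R :=
  fun i => if Nat.ltb i (n - k) then xN i else xC i.

Definition feasN (n k : nat) (Qbar : R) (xN : nat -> R) : Prop :=
  forall i, (i < n - k)%nat -> 0 <= xN i <= Qbar.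

Definition feasC (n k : nat) (Qbar : R) (xC : nat -> R) : Prop :=
  forall i, (n - k <= i < n)%nat -> 0 <= xC i <= Qbar.

Definition update (x : nat -> R) (i : nat) (y : R) : nat -> R :=
  fun j => if Nat.eqb j i then y else x j.

Definition NE (n k : nat) (Qbar : R) (H : R -> R) (alpha : nat -> R)
  (h g : nat -> R -> R) (xC xN : nat -> R) : Prop :=
  feasN n k Qbar xN /\
  forall j, (j < n - k)%nat -> forall y, 0 <= y <= Qbar ->
    payoff n H alpha h g j (join n k (update xN j y) xC)
      <= payoff n H alpha h g j (join n k xN xC).

Definition coopSum (n k : nat) (H : R -> R) (alpha : nat -> R)
  (h g : nat -> R -> R) (xN xC : nat -> R) : R :=
  sumR n (fun i => if Nat.leb (n - k) i
                   then payoff n H alpha h g i (join n k xN xC) else 0).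

(* xN attains min_{x^{N_k} in NE(xC)} of the cooperators' sum payoff,
   i.e. coopSum xN xC = tilde-pi(xC) *)
Definition NE_argmin (n k : nat) (Qbar : R) (H : R -> R) (alpha : nat -> R)
  (h g : nat -> R -> R) (xC xN : nat -> R) : Prop :=
  NE n k Qbar H alpha h g xC xN /\
  forall xN', NE n k Qbar H alpha h g xC xN' ->
    coopSum n k H alpha h g xN xC <= coopSum n k H alpha h g xN' xC.

(* Partial cooperative leadership equilibrium at level k:
   x^{C_k}_* maximizes tilde-pi over [0,Qbar]^{C_k} (tilde-pi being the
   min over NE, required to be attained at every feasible x^{C_k}), and
   x^{N_k}_* is a minimizer in NE(x^{C_k}_* ). *)
Definition PCLE (n k : nat) (Qbar : R) (H : R -> R) (alpha : nat -> R)
  (h g : nat -> R -> R) (xN xC : nat -> R) : Prop :=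
  feasC n k Qbar xC /\
  NE_argmin n k Qbar H alpha h g xC xN /\
  forall xC', feasC n k Qbar xC' ->
    exists xN', NE_argmin n k Qbar H alpha h g xC' xN' /\
      coopSum n k H alpha h g xN' xC' <= coopSum n k H alpha h g xN xC.

(* Main.v *)
From Stdlib Require Import Reals Lra Lia Classical ClassicalEpsilon.
Require Import Defs.
Open Scope R_scope.

Lemma sumR_ext n f g : (forall i, (i < n)%nat -> f i = g i) -> sumR n f = sumR n g.
Proof.
  induction n; simpl; intros; auto.
  rewrite IHn by (intros; apply H; lia). rewrite H by lia. reflexivity.
Qed.

Lemma sumR_plus n f g : sumR n (fun i => f i + g i) = sumR n f + sumR n g.
Proof. induction n; simpl; [lra|]. rewrite IHn; lra. Qed.

Lemma sumR_minus n f g : sumR n (fun i => f i - g i) = sumR n f - sumR n g.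
Proof. induction n; simpl; [lra|]. rewrite IHn; lra. Qed.

Lemma sumR_scal n c f : sumR n (fun i => c * f i) = c * sumR n f.
Proof. induction n; simpl; [lra|]. rewrite IHn; lra. Qed.

Lemma sumR_le n f g : (forall i, (i < n)%nat -> f i <= g i) -> sumR n f <= sumR n g.
Proof.
  induction n; cbn [sumR]; intros; [simpl; lra|].
  assert (sumR n f <= sumR n g) by (apply IHn; intros; apply H; lia).
  assert (f n <= g n) by (apply H; lia). lra.
Qed.

Lemma sumR_bound n f c : (forall i, (i < n)%nat -> f i <= c) -> sumR n f <= INR n * c.
Proof.
  induction n; cbn [sumR]; intros; [simpl; lra|].
  assert (sumR n f <= INR n * c) by (apply IHn; intros; apply H; lia).
  assert (f n <= c) by (apply H; lia). rewrite S_INR. lra.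
Qed.

Lemma sumR_zero n f : (forall i, (i < n)%nat -> f i = 0) -> sumR n f = 0.
Proof.
  intro H. rewrite (sumR_ext n f (fun _ => 0)) by auto. clear H.
  induction n; simpl; [lra|]. rewrite IHn; lra.
Qed.

Lemma sumR_update n x j y : (j < n)%nat ->
  sumR n (update x j y) = sumR n x - x j + y.
Proof.
  unfold update. induction n; intros; [lia|]. simpl.
  destruct (Nat.eq_dec j n).
  - subst. rewrite Nat.eqb_refl.
    rewrite (sumR_ext n _ x). lra. intros. destruct (Nat.eqb_spec i n); [lia|auto].
  - rewrite IHn by lia. destruct (Nat.eqb_spec n j); [lia|]. lra.
Qed.

Lemma sumR_trunc m d f : sumR (m + d) (fun i => if Nat.ltb i m then f i else 0) = sumR m f.
Proof.
  induction d.
  - rewrite Nat.add_0_r. apply sumR_ext. intros. destruct (Nat.ltb_spec i m); [auto|lia].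
  - rewrite Nat.add_succ_r. simpl. rewrite IHd. destruct (Nat.ltb_spec (m+d) m); [lia|lra].
Qed.

Lemma sumR_ge0 n f : (forall i, (i < n)%nat -> 0 <= f i) -> 0 <= sumR n f.
Proof. intros. rewrite <- (sumR_zero n (fun _ => 0)) by auto. apply sumR_le; auto. Qed.

Lemma sumR_abs_close n x y d : (forall i, (i < n)%nat -> Rabs (y i - x i) < d) ->
  Rabs (sumR n y - sumR n x) <= INR n * d.
Proof.
  induction n; cbn [sumR]; intros.
  - rewrite Rminus_diag, Rabs_R0. simpl; lra.
  - rewrite S_INR.
    assert (Rabs (sumR n y - sumR n x) <= INR n * d) by (apply IHn; intros; apply H; lia).
    assert (Rabs (y n - x n) < d) by (apply H; lia).
    replace (sumR n y + y n - (sumR n x + x n)) with ((sumR n y - sumR n x) + (y n - x n)) by ring.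
    eapply Rle_trans. apply Rabs_triang. lra.
Qed.

Definition box (a b : nat) (Q : R) (x : nat -> R) : Prop :=
  forall i, (a <= i < b)%nat -> 0 <= x i <= Q.
Definition close (a b : nat) (d : R) (x y : nat -> R) : Prop :=
  forall i, (a <= i < b)%nat -> Rabs (y i - x i) < d.

Lemma sum_cont a n Q (F : nat -> R -> R) x :
 (forall i, (a <= i < n)%nat -> forall eps, 0<eps -> exists d, 0<d /\
    forall t, 0<=t<=Q -> Rabs (t - x i) < d -> Rabs (F i t - F i (x i)) < eps) ->
 forall eps, 0 < eps -> exists d, 0 < d /\ forall y, box a n Q y -> close a n d x y ->
   Rabs (sumR n (fun i => if Nat.leb a i then F i (y i) else 0)
         - sumR n (fun i => if Nat.leb a i then F i (x i) else 0)) < eps.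
Proof.
  induction n; intros HF eps Heps.
  - exists 1. split; [lra|]. intros. simpl. rewrite Rminus_diag, Rabs_R0. lra.
  - destruct (IHn (fun i Hi => HF i ltac:(lia)) (eps/2)) as [d1 [Hd1 H1]]; [lra|].
    destruct (Nat.leb_spec a n).
    + destruct (HF n ltac:(lia) (eps/2)) as [d2 [Hd2 H2]]; [lra|].
      exists (Rmin d1 d2). split; [apply Rmin_glb_lt; lra|].
      intros y Hy Hc. cbn [sumR].
      destruct (Nat.leb_spec a n); [|lia].
      assert (A1 : Rabs (sumR n (fun i => if Nat.leb a i then F i (y i) else 0) -
         sumR n (fun i => if Nat.leb a i then F i (x i) else 0)) < eps/2).
      { apply H1. intros i Hi; apply Hy; lia. intros i Hi.
        eapply Rlt_le_trans. apply Hc. lia. apply Rmin_l. }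
      assert (A2 : Rabs (F n (y n) - F n (x n)) < eps/2).
      { apply H2. apply Hy; lia. eapply Rlt_le_trans. apply Hc. lia. apply Rmin_r. }
      match goal with |- Rabs (?s1 + ?a1 - (?s2 + ?a2)) < _ =>
        replace (s1 + a1 - (s2 + a2)) with ((s1 - s2) + (a1 - a2)) by ring end.
      eapply Rle_lt_trans. apply Rabs_triang. lra.
    + exists d1. split; auto. intros y Hy Hc. cbn [sumR].
      destruct (Nat.leb_spec a n); [lia|].
      match goal with |- Rabs (?s1 + ?a1 - (?s2 + ?a2)) < _ =>
        replace (s1 + a1 - (s2 + a2)) with (s1 - s2) by ring end.
      assert (Rabs (sumR n (fun i => if Nat.leb a i then F i (y i) else 0) -
         sumR n (fun i => if Nat.leb a i then F i (x i) else 0)) < eps/2).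
      { apply H1. intros i Hi; apply Hy; lia. intros i Hi. apply Hc. lia. }
      lra.
Qed.

Fixpoint mkphi (c : nat -> nat -> nat) (n : nat) : nat :=
  match n with O => c O O | S n' => c (S (mkphi c n')) (S n') end.

Lemma strict_mono (phi : nat -> nat) : (forall n, (phi n < phi (S n))%nat) ->
  forall p q, (p < q)%nat -> (phi p < phi q)%nat.
Proof.
  intros H p q Hpq. induction q; [lia|].
  destruct (Nat.eq_dec p q). subst; auto. specialize (H q). specialize (IHq ltac:(lia)). lia.
Qed.

Lemma strict_ge (phi : nat -> nat) : (forall n, (phi n < phi (S n))%nat) ->
  forall n, (n <= phi n)%nat.
Proof. intros H n. induction n; [lia|]. specialize (H n). lia. Qed.

Lemma inv_small eps : 0 < eps -> exists N, forall n, (N <= n)%nat -> / (INR n + 1) < eps.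
Proof.
  intros He. destruct (archimed_cor1 eps He) as [N [HN HN0]]. exists N. intros n Hn.
  apply le_INR in Hn. assert (0 < INR N) by (apply lt_0_INR; auto).
  eapply Rlt_trans; [|apply HN]. apply Rinv_lt_contravar. nra. lra.
Qed.

Lemma extract1 Q (u : nat -> R) : (forall n, 0 <= u n <= Q) ->
  exists (phi : nat -> nat) l, (forall n, (phi n < phi (S n))%nat) /\ 0 <= l <= Q /\
    forall eps, 0 < eps -> exists N, forall n, (N <= n)%nat -> Rabs (u (phi n) - l) < eps.
Proof.
  intros Hu.
  destruct (Bolzano_Weierstrass u (fun c => 0 <= c <= Q) (compact_P3 0 Q) Hu) as [l Hl].
  assert (spec : forall N e : nat, exists p, (N <= p)%nat /\ Rabs (u p - l) < / (INR e + 1)).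
  { intros N e.
    assert (Hpos : 0 < / (INR e + 1)) by (apply Rinv_0_lt_compat; pose proof (pos_INR e); lra).
    destruct (Hl (fun y => Rabs (y - l) < / (INR e + 1)) N) as [p Hp].
    - exists (mkposreal _ Hpos). intros y Hy. exact Hy.
    - exists p; exact Hp. }
  set (c := fun N e => proj1_sig (constructive_indefinite_description _ (spec N e))).
  assert (Hc : forall N e, (N <= c N e)%nat /\ Rabs (u (c N e) - l) < / (INR e + 1)).
  { intros. unfold c. destruct (constructive_indefinite_description _ (spec N e)); auto. }
  assert (Hphi1 : forall n, (mkphi c n < mkphi c (S n))%nat).
  { intros n. simpl. destruct (Hc (S (mkphi c n)) (S n)). lia. }
  assert (Hphi2 : forall n, Rabs (u (mkphi c n) - l) < / (INR n + 1)).
  { intros [|n]; simpl. apply Hc. apply Hc. }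
  assert (Hconv : forall eps, 0 < eps -> exists N, forall n, (N <= n)%nat -> Rabs (u (mkphi c n) - l) < eps).
  { intros eps He. destruct (inv_small eps He) as [N HN]. exists N. intros n Hn.
    eapply Rlt_trans. apply Hphi2. apply HN; auto. }
  exists (mkphi c), l. split; auto. split; auto.
  split.
  - destruct (Rle_or_lt 0 l); auto. destruct (Hconv (-l)) as [N HN]; [lra|].
    specialize (HN N (le_n _)). specialize (Hu (mkphi c N)). apply Rabs_def2 in HN. lra.
  - destruct (Rle_or_lt l Q); auto. destruct (Hconv (l - Q)) as [N HN]; [lra|].
    specialize (HN N (le_n _)). specialize (Hu (mkphi c N)). apply Rabs_def2 in HN. lra.
Qed.

Lemma extract Q a b (xs : nat -> nat -> R) : (forall n, box a b Q (xs n)) ->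
  exists (phi : nat -> nat) l, (forall n, (phi n < phi (S n))%nat) /\ box a b Q l /\
   forall eps, 0 < eps -> exists N, forall n, (N <= n)%nat -> close a b eps l (xs (phi n)).
Proof.
  revert xs. induction b; intros xs Hxs.
  - exists (fun n => n), (fun _ => 0). split; [lia|]. split.
    intros i Hi; lia. intros. exists O. intros n _ i Hi. lia.
  - destruct (Nat.le_gt_cases a b) as [Hab|Hab].
    + destruct (IHb xs) as [phi1 [l1 [Hp1 [Hl1 Hc1]]]].
      { intros n i Hi. apply Hxs. lia. }
      destruct (extract1 Q (fun n => xs (phi1 n) b)) as [phi2 [c [Hp2 [Hcq Hc2]]]].
      { intros n. apply Hxs. lia. }
      exists (fun n => phi1 (phi2 n)), (update l1 b c). split; [|split].
      * intros n. apply strict_mono; auto.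
      * intros i Hi. unfold update. destruct (Nat.eqb_spec i b); auto. apply Hl1. lia.
      * intros eps He. destruct (Hc1 eps He) as [N1 HN1]. destruct (Hc2 eps He) as [N2 HN2].
        exists (Nat.max N1 N2). intros n Hn i Hi. unfold update.
        destruct (Nat.eqb_spec i b).
        -- subst. apply HN2. lia.
        -- apply HN1. pose proof (strict_ge phi2 Hp2 n). lia. lia.
    + exists (fun n => n), (fun _ => 0). split; [lia|]. split.
      intros i Hi; lia. intros. exists O. intros n _ i Hi. lia.
Qed.

Lemma CL a b Q (f : (nat -> R) -> R) (B : R) : 0 <= Q ->
  (forall x, box a b Q x -> f x <= B) ->
  (forall x, box a b Q x -> forall eps, 0 < eps -> exists d, 0 < d /\
     forall y, box a b Q y -> close a b d x y -> f y <= f x + eps) ->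
  exists x, box a b Q x /\ forall y, box a b Q y -> f y <= f x.
Proof.
  intros HQ HB Husc.
  set (E := fun r => exists x, box a b Q x /\ r = f x).
  destruct (completeness E) as [M [HM1 HM2]].
  { exists B. intros r [x [Hx ->]]. apply HB; auto. }
  { exists (f (fun _ => 0)). exists (fun _ => 0). split; auto. intros i _. lra. }
  assert (Happ : forall n : nat, exists x, box a b Q x /\ M - / (INR n + 1) < f x).
  { intros n. apply NNPP. intro Hn.
    assert (Hpos : 0 < / (INR n + 1)) by (apply Rinv_0_lt_compat; pose proof (pos_INR n); lra).
    assert (M <= M - / (INR n + 1)); [|lra].
    apply HM2. intros r [x [Hx ->]]. destruct (Rle_or_lt (f x) (M - / (INR n + 1))); auto.
    exfalso; apply Hn; exists x; auto. }
  set (xs := fun n => proj1_sig (constructive_indefinite_description _ (Happ n))).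
  assert (Hxs : forall n, box a b Q (xs n) /\ M - / (INR n + 1) < f (xs n)).
  { intros. unfold xs. destruct (constructive_indefinite_description _ (Happ n)); auto. }
  destruct (extract Q a b xs) as [phi [l [Hp [Hl Hc]]]]. { intros; apply Hxs. }
  exists l. split; auto.
  assert (HMl : M <= f l).
  { apply Rnot_lt_le. intro Hlt.
    set (e := (M - f l) / 3).
    destruct (Husc l Hl e) as [d [Hd Hd2]]. unfold e; lra.
    destruct (Hc d Hd) as [N1 HN1]. destruct (inv_small e) as [N2 HN2]. unfold e; lra.
    set (n := Nat.max N1 N2).
    assert (f (xs (phi n)) <= f l + e) by (apply Hd2; [apply Hxs | apply HN1; lia]).
    pose proof (proj2 (Hxs (phi n))).
    assert (/ (INR (phi n) + 1) < e) by (apply HN2; pose proof (strict_ge phi Hp n); lia).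
    unfold e in *. lra. }
  intros y Hy. assert (f y <= M) by (apply HM1; exists y; auto). lra.
Qed.

Lemma tangent_convex f a b x z d : convex_on f a b -> has_derivative_within f a b x d ->
  a <= x <= b -> a <= z <= b -> f x + d * (z - x) <= f z.
Proof.
  intros Hcv Hd Hx Hz.
  destruct (Req_dec z x) as [->|Hzx]. lra.
  apply Rnot_lt_le. intro Hlt.
  set (gam := f x + d * (z - x) - f z).
  assert (Hg : 0 < gam) by (unfold gam; lra).
  assert (Hzx' : 0 < Rabs (z - x)) by (apply Rabs_pos_lt; lra).
  destruct (Hd (gam / Rabs (z - x))) as [del [Hdel Hdel2]].
  { apply Rdiv_lt_0_compat; lra. }
  set (t := Rmin 1 (del / (2 * Rabs (z - x)))).
  assert (Ht0 : 0 < t). { unfold t. apply Rmin_glb_lt. lra. apply Rdiv_lt_0_compat; lra. }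
  assert (Ht1 : t <= 1) by apply Rmin_l.
  assert (Ht2 : t <= del / (2 * Rabs (z - x))) by apply Rmin_r.
  set (y := t * z + (1 - t) * x).
  assert (Hy : a <= y <= b) by (unfold y; split; nra).
  assert (Hyx : y - x = t * (z - x)) by (unfold y; ring).
  assert (Hyx0 : y <> x). { intro E. assert (t * (z - x) = 0) by lra.
    apply Rmult_integral in H. destruct H; lra. }
  assert (Hyd : Rabs (y - x) < del).
  { rewrite Hyx, Rabs_mult, (Rabs_right t) by lra.
    assert (t * Rabs (z - x) <= del / 2).
    { apply Rmult_le_compat_r with (r := Rabs (z - x)) in Ht2; [|lra].
      replace (del / (2 * Rabs (z - x)) * Rabs (z - x)) with (del / 2) in Ht2 by (field; lra). lra. }
    lra. }
  specialize (Hdel2 y Hy Hyx0 Hyd).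
  set (q := (f y - f x) / (y - x)) in *.
  assert (Hq : f y - f x = q * (t * (z - x))). { unfold q. rewrite Hyx. field. split; lra. }
  assert (Hconv : f y <= t * f z + (1 - t) * f x) by (apply Hcv; auto; lra).
  assert (H1 : q * (z - x) <= f z - f x).
  { assert (t * (q * (z - x)) <= t * (f z - f x)) by nra.
    apply Rmult_le_reg_l in H; auto. }
  assert (H2 : Rabs ((q - d) * (z - x)) < gam).
  { rewrite Rabs_mult.
    apply Rmult_lt_compat_r with (r := Rabs (z - x)) in Hdel2; auto.
    replace (gam / Rabs (z - x) * Rabs (z - x)) with gam in Hdel2 by (field; lra). auto. }
  apply Rabs_def2 in H2. unfold gam in *. lra.
Qed.

Lemma deriv_within_cont f a b x d : has_derivative_within f a b x d ->
  forall eps, 0 < eps -> exists del, 0 < del /\ forall y, a <= y <= b -> Rabs (y - x) < del ->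
    Rabs (f y - f x) < eps.
Proof.
  intros Hd eps He.
  destruct (Hd 1 ltac:(lra)) as [del [Hdel H]].
  set (r := eps / (Rabs d + 1)).
  assert (Hr : 0 < r) by (unfold r; apply Rdiv_lt_0_compat; pose proof (Rabs_pos d); lra).
  exists (Rmin del r). split. apply Rmin_glb_lt; lra.
  intros y Hy Hyx.
  destruct (Req_dec y x) as [->|Hne]. rewrite Rminus_diag, Rabs_R0. lra.
  assert (Hyx1 : Rabs (y - x) < del) by (eapply Rlt_le_trans; [apply Hyx|apply Rmin_l]).
  assert (Hyx2 : Rabs (y - x) < r) by (eapply Rlt_le_trans; [apply Hyx|apply Rmin_r]).
  specialize (H y Hy Hne Hyx1).
  set (q := (f y - f x) / (y - x)) in *.
  assert (Hq : f y - f x = q * (y - x)) by (unfold q; field; lra).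
  rewrite Hq, Rabs_mult.
  assert (Rabs q <= Rabs d + 1).
  { replace q with ((q - d) + d) by ring. eapply Rle_trans. apply Rabs_triang. lra. }
  assert (Rabs q * Rabs (y - x) <= (Rabs d + 1) * Rabs (y - x)).
  { apply Rmult_le_compat_r; auto. apply Rabs_pos. }
  assert ((Rabs d + 1) * Rabs (y - x) < (Rabs d + 1) * r).
  { apply Rmult_lt_compat_l; auto. pose proof (Rabs_pos d); lra. }
  unfold r in H2. replace ((Rabs d + 1) * (eps / (Rabs d + 1))) with eps in H2
    by (field; pose proof (Rabs_pos d); lra). lra.
Qed.

Lemma dpl_within f x l a b : derivable_pt_lim f x l -> has_derivative_within f a b x l.
Proof.
  intros H eps He. destruct (H eps He) as [del Hdel]. exists del. split. apply cond_pos.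
  intros y _ Hne Hy. specialize (Hdel (y - x) ltac:(lra) Hy).
  replace (x + (y - x)) with y in Hdel by ring. auto.
Qed.

Lemma dpl_cont f x l : derivable_pt_lim f x l ->
  forall eps, 0 < eps -> exists del, 0 < del /\ forall y, Rabs (y - x) < del -> Rabs (f y - f x) < eps.
Proof.
  intros H eps He.
  destruct (deriv_within_cont f (x - 1) (x + 1) x l (dpl_within f x l _ _ H) eps He) as [d [Hd H2]].
  exists (Rmin d 1). split. apply Rmin_glb_lt; lra.
  intros y Hy. apply H2.
  assert (Rabs (y - x) < 1) by (eapply Rlt_le_trans; [apply Hy|apply Rmin_r]).
  apply Rabs_def2 in H0. lra.
  eapply Rlt_le_trans; [apply Hy|apply Rmin_l].
Qed.

Lemma cont_pt_eps f x : continuity_pt f x ->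
  forall eps, 0 < eps -> exists del, 0 < del /\ forall y, Rabs (y - x) < del -> Rabs (f y - f x) < eps.
Proof.
  intros H eps He. destruct (H eps He) as [del [Hd H2]]. exists del. split; auto.
  intros y Hy. destruct (Req_dec y x) as [->|Hne]. rewrite Rminus_diag, Rabs_R0. lra.
  apply (H2 y). split. split. exact I. auto. exact Hy.
Qed.

Definition clampQ (Q y : R) := Rmax 0 (Rmin Q y).

Lemma clamp_prop Q y : 0 <= Q -> 0 <= clampQ Q y <= Q.
Proof. intros. unfold clampQ, Rmax, Rmin. repeat destruct Rle_dec; lra. Qed.

Lemma clamp_id Q y : 0 <= y <= Q -> clampQ Q y = y.
Proof. intros. unfold clampQ, Rmax, Rmin. repeat destruct Rle_dec; lra. Qed.

Lemma clamp_lip Q y z : 0 <= Q -> Rabs (clampQ Q y - clampQ Q z) <= Rabs (y - z).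
Proof.
  intros. unfold clampQ, Rmax, Rmin. repeat destruct Rle_dec;
  unfold Rabs; repeat destruct Rcase_abs; lra.
Qed.

Lemma IVT_within (f : R -> R) Q c : 0 < Q ->
  (forall x, 0 <= x <= Q -> continuous_within f 0 Q x) ->
  f 0 < c -> c < f Q -> exists y, 0 <= y <= Q /\ f y = c.
Proof.
  intros HQ Hc H0 H1.
  set (F := fun y => f (clampQ Q y) - c).
  assert (HF : continuity F).
  { intros x eps He. pose proof (clamp_prop Q x ltac:(lra)) as Hcx.
    destruct (Hc (clampQ Q x) Hcx eps He) as [d [Hd H]].
    exists d. split; auto. intros y [_ Hy]. simpl in *. unfold Rdist in *. unfold F.
    replace (f (clampQ Q y) - c - (f (clampQ Q x) - c)) with (f (clampQ Q y) - f (clampQ Q x)) by ring.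
    apply H. apply clamp_prop; lra.
    eapply Rle_lt_trans. apply clamp_lip. lra. auto. }
  destruct (IVT F 0 Q HF HQ) as [z [Hz Fz]].
  - unfold F. rewrite clamp_id by lra. lra.
  - unfold F. rewrite clamp_id by lra. lra.
  - exists z. split; auto. unfold F in Fz. rewrite clamp_id in Fz by auto. lra.
Qed.

Section Game.
Variables (n k : nat) (Q : R) (H : R -> R) (alpha : nat -> R) (h g : nat -> R -> R).
Variables (dH : R -> R) (dg : nat -> R -> R).
Hypothesis HQ : 0 < Q.
Hypothesis Hkn : (k <= n)%nat.
Hypothesis Halpha : forall i, (i < n)%nat -> 0 < alpha i.
Hypothesis Hh : forall i, (i < n)%nat -> forall t, 0 <= t <= Q -> h i t = t.
Hypothesis HHinc : increasing H.
Hypothesis HHconc : concave H.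
Hypothesis HdH : forall x, derivable_pt_lim H x (dH x).
Hypothesis HdHc : continuity dH.
Hypothesis Hdg : forall i, (i < n)%nat -> forall x, 0 <= x <= Q -> has_derivative_within (g i) 0 Q x (dg i x).
Hypothesis Hdgc : forall i, (i < n)%nat -> forall x, 0 <= x <= Q -> continuous_within (dg i) 0 Q x.
Hypothesis Hginc : forall i, (i < n)%nat -> increasing_on (g i) 0 Q.
Hypothesis Hgconv : forall i, (i < n)%nat -> convex_on (g i) 0 Q.

Let m := (n - k)%nat.

Lemma tangent_H x z : H z <= H x + dH x * (z - x).
Proof.
  assert (Hc : convex_on (fun t => - H t) (Rmin x z) (Rmax x z)).
  { intros a b t _ _ Ht. specialize (HHconc a b t Ht). lra. }
  pose proof (tangent_convex (fun t => - H t) (Rmin x z) (Rmax x z) x z (- dH x) Hc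
     (dpl_within _ _ _ _ _ (derivable_pt_lim_opp H x (dH x) (HdH x)))).
  assert (Rmin x z <= x <= Rmax x z) by (split; [apply Rmin_l|apply Rmax_l]).
  assert (Rmin x z <= z <= Rmax x z) by (split; [apply Rmin_r|apply Rmax_r]).
  specialize (H0 H1 H2). lra.
Qed.

Lemma dH_noninc x y : x <= y -> dH y <= dH x.
Proof.
  intros. pose proof (tangent_H x y). pose proof (tangent_H y x).
  destruct (Req_dec x y). subst; lra. nra.
Qed.

Lemma tangent_g i x z : (i < n)%nat -> 0 <= x <= Q -> 0 <= z <= Q -> g i x + dg i x * (z - x) <= g i z.
Proof. intros. apply (tangent_convex _ 0 Q); auto. Qed.

Lemma dg_nondec i x y : (i < n)%nat -> 0 <= x <= Q -> 0 <= y <= Q -> x <= y -> dg i x <= dg i y.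
Proof.
  intros. pose proof (tangent_g i x y H0 H1 H2). pose proof (tangent_g i y x H0 H2 H1).
  destruct (Req_dec x y). subst; lra. nra.
Qed.

Definition bset (j : nat) (S y : R) : Prop :=
  0 <= y <= Q /\ (0 < y -> dg j y <= alpha j * dH S) /\ (y < Q -> alpha j * dH S <= dg j y).

Lemma bset_lattice j S S' y y' : (j < n)%nat -> S <= S' -> bset j S y -> bset j S' y' ->
  bset j S' (Rmin y y') /\ bset j S (Rmax y y').
Proof.
  intros Hj HS [Hy1 [Hy2 Hy3]] [Hy1' [Hy2' Hy3']].
  pose proof (dH_noninc S S' HS). pose proof (Halpha j Hj).
  assert (alpha j * dH S' <= alpha j * dH S) by nra.
  unfold Rmin, Rmax. destruct (Rle_dec y y').
  - destruct (Req_dec y y').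
    + subst. split; repeat split; auto; lra.
    + assert (dg j y <= dg j y') by (apply dg_nondec; auto; lra).
      assert (alpha j * dH S <= dg j y) by (apply Hy3; lra).
      assert (dg j y' <= alpha j * dH S') by (apply Hy2'; lra).
      split; repeat split; auto; intros; lra.
  - split; repeat split; auto; lra.
Qed.

Lemma bset_interval j S y1 y2 y : (j < n)%nat -> bset j S y1 -> bset j S y2 -> y1 <= y <= y2 -> bset j S y.
Proof.
  intros Hj [A1 [A2 A3]] [B1 [B2 B3]] Hy. split; [lra|split].
  - intros. destruct (Req_dec y y2). subst; apply B2; lra.
    assert (dg j y <= dg j y2) by (apply dg_nondec; auto; lra). assert (dg j y2 <= alpha j * dH S) by (apply B2; lra). lra.
  - intros. destruct (Req_dec y y1). subst; apply A3; lra.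
    assert (dg j y1 <= dg j y) by (apply dg_nondec; auto; lra). assert (alpha j * dH S <= dg j y1) by (apply A3; lra). lra.
Qed.

Lemma bset_nonempty j S : (j < n)%nat -> exists y, bset j S y.
Proof.
  intros Hj. set (c := alpha j * dH S).
  destruct (Rle_or_lt c (dg j 0)).
  - exists 0. unfold bset; fold c. split; [lra|split]; intros; lra.
  - destruct (Rle_or_lt (dg j Q) c).
    + exists Q. unfold bset; fold c. split; [lra|split]; intros; lra.
    + destruct (IVT_within (dg j) Q c HQ (Hdgc j Hj) H0 H1) as [y [Hy Hyc]].
      exists y. unfold bset; fold c. split; auto. split; intros; lra.
Qed.

Lemma bvec_nonempty S : exists p : nat -> R, forall j, (j < m)%nat -> bset j S (p j).
Proof.
  assert (forall d, (d <= m)%nat -> exists p : nat -> R, forall j, (j < d)%nat -> bset j S (p j)).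
  { induction d; intros. exists (fun _ => 0). intros; lia.
    destruct (IHd ltac:(lia)) as [p Hp]. destruct (bset_nonempty d S ltac:(unfold m in *; lia)) as [y Hy].
    exists (update p d y). intros j Hj. unfold update. destruct (Nat.eqb_spec j d). subst; auto. apply Hp; lia. }
  apply H0. lia.
Qed.

Lemma MID S1 S2 S3 (u v : nat -> R) tau :
  (forall j, (j < m)%nat -> bset j S1 (u j)) -> (forall j, (j < m)%nat -> bset j S3 (v j)) ->
  S1 <= S2 -> S2 <= S3 -> sumR m u <= tau -> tau <= sumR m v ->
  exists w, (forall j, (j < m)%nat -> bset j S2 (w j)) /\ sumR m w = tau.
Proof.
  intros Hu Hv H12 H23 Ht1 Ht2.
  destruct (bvec_nonempty S2) as [p Hp].
  set (L := fun j => Rmin (u j) (p j)). set (U := fun j => Rmax (p j) (v j)).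
  assert (HL : forall j, (j < m)%nat -> bset j S2 (L j)).
  { intros. apply (bset_lattice j S1 S2); auto; unfold m in *; lia. }
  assert (HU : forall j, (j < m)%nat -> bset j S2 (U j)).
  { intros. apply (bset_lattice j S2 S3); auto; unfold m in *; lia. }
  assert (HLU : forall j, L j <= U j).
  { intros. unfold L, U. pose proof (Rmin_r (u j) (p j)). pose proof (Rmax_l (p j) (v j)). lra. }
  assert (S1L : sumR m L <= sumR m u) by (apply sumR_le; intros; apply Rmin_l).
  assert (S1U : sumR m v <= sumR m U) by (apply sumR_le; intros; apply Rmax_r).
  destruct (Req_dec (sumR m U) (sumR m L)) as [E|E].
  - exists L. split; auto. lra.
  - set (th := (tau - sumR m L) / (sumR m U - sumR m L)).
    assert (Hs : sumR m L <= sumR m U) by lra.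
    assert (Hth : 0 <= th <= 1).
    { unfold th. split. unfold Rdiv; apply Rmult_le_pos; [lra|]; apply Rlt_le, Rinv_0_lt_compat; lra.
      apply Rmult_le_reg_r with (sumR m U - sumR m L). lra.
      unfold Rdiv. rewrite Rmult_assoc, Rinv_l by lra. lra. }
    exists (fun j => L j + th * (U j - L j)). split.
    + intros j Hj. apply (bset_interval j S2 (L j) (U j)); auto. unfold m in *; lia.
      pose proof (HLU j). nra.
    + rewrite sumR_plus, sumR_scal, sumR_minus. unfold th. field. lra.
Qed.

Definition Sagg (xN xC : nat -> R) := sumR n (join n k xN xC).
Definition Tc (xC : nat -> R) := sumR n (fun i => if Nat.leb m i then xC i else 0).

Lemma Sagg_dec xN xC : Sagg xN xC = sumR m xN + Tc xC.
Proof.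
  unfold Sagg, Tc, join.
  rewrite (sumR_ext n _ (fun i => (if Nat.ltb i m then xN i else 0) + (if Nat.leb m i then xC i else 0))).
  - rewrite sumR_plus. f_equal. replace n with (m + k)%nat at 1 by (unfold m; lia).
    apply sumR_trunc.
  - intros i Hi. fold m. destruct (Nat.ltb_spec i m); destruct (Nat.leb_spec m i); try lia; lra.
Qed.

Lemma join_feas xN xC : feasN n k Q xN -> feasC n k Q xC -> forall i, (i < n)%nat -> 0 <= join n k xN xC i <= Q.
Proof.
  intros HN HC i Hi. unfold join. destruct (Nat.ltb_spec i (n - k)). apply HN; auto. apply HC; lia.
Qed.

Lemma hsum xN xC : feasN n k Q xN -> feasC n k Q xC ->
  sumR n (fun j => h j (join n k xN xC j)) = Sagg xN xC.
Proof.
  intros HN HC. unfold Sagg. apply sumR_ext. intros. apply Hh; auto. apply join_feas; auto.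
Qed.

Lemma feasN_update xN j y : feasN n k Q xN -> 0 <= y <= Q -> feasN n k Q (update xN j y).
Proof. intros HN Hy i Hi. unfold update. destruct (Nat.eqb_spec i j); auto. Qed.

Lemma payoff_at xN xC j : feasN n k Q xN -> feasC n k Q xC -> (j < m)%nat ->
  payoff n H alpha h g j (join n k xN xC) = alpha j * H (Sagg xN xC) - g j (xN j).
Proof.
  intros HN HC Hj. unfold payoff. rewrite hsum by auto. unfold join.
  destruct (Nat.ltb_spec j (n - k)); [|unfold m in *; lia]. reflexivity.
Qed.

Lemma payoff_dev xN xC j y : feasN n k Q xN -> feasC n k Q xC -> (j < m)%nat -> 0 <= y <= Q ->
  payoff n H alpha h g j (join n k (update xN j y) xC) = alpha j * H (Sagg xN xC - xN j + y) - g j y.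
Proof.
  intros HN HC Hj Hy. rewrite payoff_at; auto using feasN_update.
  rewrite !Sagg_dec, sumR_update by auto. unfold update. rewrite Nat.eqb_refl. f_equal. f_equal. f_equal. ring.
Qed.

Lemma dev_pos al hh q1 a q2 b e1 e2 : 0 < al -> 0 < hh -> Rabs (q1 - a) < e1 -> Rabs (q2 - b) < e2 ->
  al * e1 + e2 <= b - al * a -> 0 < hh * (q2 - al * q1).
Proof.
  intros Hal Hh0 H1 H2 H3. apply Rabs_def2 in H1. apply Rabs_def2 in H2.
  apply Rmult_lt_0_compat; auto. assert (al * q1 < al * a + al * e1) by nra. lra.
Qed.

Lemma NE_iff xC xN : feasC n k Q xC ->
  (NE n k Q H alpha h g xC xN <-> feasN n k Q xN /\ forall j, (j < m)%nat -> bset j (Sagg xN xC) (xN j)).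
Proof.
  intros HC. split.
  - intros [HN Hdev]. split; auto. intros j Hj.
    assert (Hjn : (j < n)%nat) by (unfold m in *; lia).
    pose proof (Halpha j Hjn) as Haj.
    set (S := Sagg xN xC). set (x := xN j).
    assert (Hx : 0 <= x <= Q) by (apply HN; auto).
    assert (Hd : forall y, 0 <= y <= Q -> alpha j * H (S - x + y) - g j y <= alpha j * H S - g j x).
    { intros y Hy. specialize (Hdev j Hj y Hy). rewrite payoff_dev, payoff_at in Hdev; auto. }
    split; auto. split.
    + intros Hx0. apply Rnot_lt_le. intro Hlt. set (D := dg j x - alpha j * dH S).
      assert (HD : 0 < D) by (unfold D; lra).
      destruct (HdH S (D / (4 * alpha j))) as [d1 Hd1]. apply Rdiv_lt_0_compat; lra.
      destruct (Hdg j Hjn x Hx (D / 4)) as [d2 [Hd2 Hd2']]. lra.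
      set (hh := Rmin x (Rmin d1 d2) / 2).
      assert (Hmin : 0 < Rmin x (Rmin d1 d2)) by (repeat apply Rmin_glb_lt; try lra; apply cond_pos).
      assert (Hh1 : hh <= x / 2) by (unfold hh; pose proof (Rmin_l x (Rmin d1 d2)); lra).
      assert (Hh2 : hh < d1) by (unfold hh; pose proof (Rmin_r x (Rmin d1 d2)); pose proof (Rmin_l d1 d2); pose proof (cond_pos d1); lra).
      assert (Hh3 : hh < d2) by (unfold hh; pose proof (Rmin_r x (Rmin d1 d2)); pose proof (Rmin_r d1 d2); lra).
      assert (Hh0 : 0 < hh) by (unfold hh; lra).
      specialize (Hd1 (- hh) ltac:(lra) ltac:(rewrite Rabs_Ropp, Rabs_right; lra)).
      specialize (Hd2' (x - hh) ltac:(lra) ltac:(lra) ltac:(replace (x - hh - x) with (- hh) by ring; rewrite Rabs_Ropp, Rabs_right; lra)).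
      set (q1 := (H (S + - hh) - H S) / - hh) in *.
      set (q2 := (g j (x - hh) - g j x) / (x - hh - x)) in *.
      assert (E1 : H (S + - hh) - H S = q1 * (- hh)) by (unfold q1; field; lra).
      assert (E2 : g j (x - hh) - g j x = q2 * (- hh)) by (unfold q2; field; lra).
      pose proof (Hd (x - hh) ltac:(lra)).
      replace (S - x + (x - hh)) with (S + - hh) in H0 by ring.
      assert (0 < hh * (q2 - alpha j * q1)).
      { apply (dev_pos _ _ _ (dH S) _ (dg j x) (D / (4 * alpha j)) (D / 4)); auto.
        unfold D. field_simplify. 2: lra. unfold D; lra. }
      nra.
    + intros HxQ. apply Rnot_lt_le. intro Hlt. set (D := alpha j * dH S - dg j x).
      assert (HD : 0 < D) by (unfold D; lra).
      destruct (HdH S (D / (4 * alpha j))) as [d1 Hd1]. apply Rdiv_lt_0_compat; lra.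
      destruct (Hdg j Hjn x Hx (D / 4)) as [d2 [Hd2 Hd2']]. lra.
      set (hh := Rmin (Q - x) (Rmin d1 d2) / 2).
      assert (Hmin : 0 < Rmin (Q - x) (Rmin d1 d2)) by (repeat apply Rmin_glb_lt; try lra; apply cond_pos).
      assert (Hh1 : hh <= (Q - x) / 2) by (unfold hh; pose proof (Rmin_l (Q - x) (Rmin d1 d2)); lra).
      assert (Hh2 : hh < d1) by (unfold hh; pose proof (Rmin_r (Q - x) (Rmin d1 d2)); pose proof (Rmin_l d1 d2); pose proof (cond_pos d1); lra).
      assert (Hh3 : hh < d2) by (unfold hh; pose proof (Rmin_r (Q - x) (Rmin d1 d2)); pose proof (Rmin_r d1 d2); lra).
      assert (Hh0 : 0 < hh) by (unfold hh; lra).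
      specialize (Hd1 hh ltac:(lra) ltac:(rewrite Rabs_right; lra)).
      specialize (Hd2' (x + hh) ltac:(lra) ltac:(lra) ltac:(replace (x + hh - x) with hh by ring; rewrite Rabs_right; lra)).
      set (q1 := (H (S + hh) - H S) / hh) in *.
      set (q2 := (g j (x + hh) - g j x) / (x + hh - x)) in *.
      assert (E1 : H (S + hh) - H S = q1 * hh) by (unfold q1; field; lra).
      assert (E2 : g j (x + hh) - g j x = q2 * hh) by (unfold q2; field; lra).
      pose proof (Hd (x + hh) ltac:(lra)).
      replace (S - x + (x + hh)) with (S + hh) in H0 by ring.
      assert (0 < hh * (alpha j * q1 - q2)).
      { apply Rmult_lt_0_compat; auto. apply Rabs_def2 in Hd1. apply Rabs_def2 in Hd2'.
        assert (alpha j * q1 > alpha j * dH S - alpha j * (D / (4 * alpha j))) by nra.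
        replace (alpha j * (D / (4 * alpha j))) with (D / 4) in H1 by (field; lra).
        unfold D in *. lra. }
      nra.
  - intros [HN Hb]. split; auto. intros j Hj y Hy.
    assert (Hjn : (j < n)%nat) by (unfold m in *; lia).
    pose proof (Halpha j Hjn) as Haj.
    rewrite payoff_dev, payoff_at; auto.
    set (S := Sagg xN xC). set (x := xN j).
    destruct (Hb j Hj) as [Hx [Hb1 Hb2]]. fold S x in Hx, Hb1, Hb2.
    pose proof (tangent_H S (S - x + y)). pose proof (tangent_g j x y Hjn Hx Hy).
    replace (S - x + y - S) with (y - x) in H0 by ring.
    assert ((alpha j * dH S - dg j x) * (y - x) <= 0).
    { destruct (Rtotal_order y x) as [Hl|[He|Hg]].
      - assert (dg j x <= alpha j * dH S) by (apply Hb1; lra). nra.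
      - subst. nra.
      - assert (alpha j * dH S <= dg j x) by (apply Hb2; lra). nra. }
    nra.
Qed.

Definition Acoef := sumR n (fun i => if Nat.leb m i then alpha i else 0).
Definition Gc (xC : nat -> R) := sumR n (fun i => if Nat.leb m i then g i (xC i) else 0).

Lemma H_mono x y : x <= y -> H x <= H y.
Proof.
  intros Hxy. destruct (Req_dec x y) as [E|E]. rewrite E; lra.
  left. apply (HHinc x y). lra.
Qed.

Lemma Acoef_pos : (1 <= k)%nat -> 0 < Acoef.
Proof.
  intros Hk. unfold Acoef. replace n with (S (n - 1)) at 1 by lia. cbn [sumR].
  assert (0 <= sumR (n - 1) (fun i => if Nat.leb m i then alpha i else 0)).
  { apply sumR_ge0. intros. destruct (Nat.leb m i); [apply Rlt_le, Halpha; lia|lra]. }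
  destruct (Nat.leb_spec m (n - 1)); [|unfold m in *; lia].
  pose proof (Halpha (n - 1) ltac:(lia)). lra.
Qed.

Lemma coopSum_eq xN xC : feasN n k Q xN -> feasC n k Q xC ->
  coopSum n k H alpha h g xN xC = Acoef * H (Sagg xN xC) - Gc xC.
Proof.
  intros HN HC. unfold coopSum, Acoef, Gc.
  rewrite (sumR_ext n _ (fun i => H (Sagg xN xC) * (if Nat.leb m i then alpha i else 0) -
     (if Nat.leb m i then g i (xC i) else 0))).
  - rewrite sumR_minus, sumR_scal. ring.
  - intros i Hi. fold m. destruct (Nat.leb_spec m i); [|ring].
    unfold payoff. rewrite hsum by auto. unfold join. destruct (Nat.ltb_spec i (n - k)). unfold m in *; lia. ring.
Qed.

Lemma box_feasN x : box 0 m Q x <-> feasN n k Q x.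
Proof. unfold box, feasN, m. split; intros Hb i Hi; apply Hb; lia. Qed.

Lemma box_feasC x : box m n Q x <-> feasC n k Q x.
Proof. unfold box, feasC, m. split; intros Hb i Hi; apply Hb; lia. Qed.

Lemma NE_argmin_of xC xN : feasC n k Q xC -> NE n k Q H alpha h g xC xN ->
  (forall xN', NE n k Q H alpha h g xC xN' -> sumR m xN <= sumR m xN') ->
  NE_argmin n k Q H alpha h g xC xN.
Proof.
  intros HC HNE Hmin. split; auto. intros xN' HNE'.
  pose proof (proj1 HNE) as HN. pose proof (proj1 HNE') as HN'.
  rewrite !coopSum_eq by auto. rewrite !Sagg_dec.
  assert (0 <= Acoef).
  { unfold Acoef. apply sumR_ge0. intros. destruct (Nat.leb m i); [apply Rlt_le, Halpha; lia|lra]. }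
  assert (H (sumR m xN + Tc xC) <= H (sumR m xN' + Tc xC)) by (apply H_mono; specialize (Hmin xN' HNE'); lra).
  nra.
Qed.

Lemma g_cont i x : (i < n)%nat -> 0 <= x <= Q -> forall eps, 0 < eps -> exists d, 0 < d /\
  forall t, 0 <= t <= Q -> Rabs (t - x) < d -> Rabs (g i t - g i x) < eps.
Proof. intros. eapply deriv_within_cont; eauto. Qed.

Lemma sumR_close_eps a xs ys d eps : 0 < d -> INR a * d < eps ->
  (forall i, (i < a)%nat -> Rabs (ys i - xs i) < d) -> Rabs (sumR a ys - sumR a xs) < eps.
Proof. intros. eapply Rle_lt_trans. apply sumR_abs_close; eauto. auto. Qed.

Lemma small_div d N : 0 < d -> 0 < d / (INR N + 1) /\ INR N * (d / (INR N + 1)) < d.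
Proof.
  intros. pose proof (pos_INR N). split. apply Rdiv_lt_0_compat; lra.
  apply Rmult_lt_reg_r with (INR N + 1). lra.
  replace (INR N * (d / (INR N + 1)) * (INR N + 1)) with (INR N * d) by (field; lra). nra.
Qed.

Lemma NE_exists xC : feasC n k Q xC -> exists xN, NE n k Q H alpha h g xC xN.
Proof.
  intros HC.
  set (P := fun x : nat -> R => H (sumR m x + Tc xC) - sumR m (fun j => g j (x j) / alpha j)).
  destruct (CL 0 m Q P (H (INR m * Q + Tc xC) - sumR m (fun j => g j 0 / alpha j))) as [xs [Hxs Hmax]].
  - lra.
  - intros x Hx. unfold P.
    assert (H (sumR m x + Tc xC) <= H (INR m * Q + Tc xC)).
    { apply H_mono. assert (sumR m x <= INR m * Q) by (apply sumR_bound; intros; apply Hx; lia). lra. }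
    assert (sumR m (fun j => g j 0 / alpha j) <= sumR m (fun j => g j (x j) / alpha j)).
    { apply sumR_le. intros i Hi. assert (Hin : (i < n)%nat) by (unfold m in *; lia).
      pose proof (Halpha i Hin). unfold Rdiv. apply Rmult_le_compat_r. left; apply Rinv_0_lt_compat; auto.
      destruct (Hx i ltac:(lia)). destruct (Req_dec (x i) 0) as [E|E]. rewrite E; lra.
      left. apply (Hginc i Hin); lra. }
    lra.
  - intros x Hx eps He.
    destruct (dpl_cont H _ _ (HdH (sumR m x + Tc xC)) (eps / 2)) as [d1 [Hd1 Hd1']]. lra.
    destruct (sum_cont 0 m Q (fun j t => g j t / alpha j) x) with (eps := eps / 2) as [d2 [Hd2 Hd2']].
    { intros i Hi e He'. assert (Hin : (i < n)%nat) by (unfold m in *; lia).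
      pose proof (Halpha i Hin).
      destruct (g_cont i (x i) Hin (Hx i Hi) (e * alpha i)) as [d [Hd Hd']]. nra.
      exists d. split; auto. intros t Ht Htd. specialize (Hd' t Ht Htd).
      replace (g i t / alpha i - g i (x i) / alpha i) with ((g i t - g i (x i)) / alpha i) by (field; lra).
      unfold Rdiv. rewrite Rabs_mult, Rabs_inv, (Rabs_right (alpha i)) by lra.
      apply Rmult_lt_reg_r with (alpha i); auto. rewrite Rmult_assoc, Rinv_l by lra. lra. }
    lra.
    destruct (small_div d1 m Hd1) as [Hd3 Hd3'].
    exists (Rmin d2 (d1 / (INR m + 1))). split. apply Rmin_glb_lt; auto.
    intros y Hy Hc. unfold P.
    assert (A1 : Rabs (sumR m y - sumR m x) < d1).
    { apply (sumR_close_eps m x y (Rmin d2 (d1 / (INR m + 1)))). apply Rmin_glb_lt; auto.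
      eapply Rle_lt_trans; [|apply Hd3']. apply Rmult_le_compat_l. apply pos_INR. apply Rmin_r.
      intros i Hi. apply Hc. lia. }
    assert (A2 : Rabs (H (sumR m y + Tc xC) - H (sumR m x + Tc xC)) < eps / 2).
    { apply Hd1'. replace (sumR m y + Tc xC - (sumR m x + Tc xC)) with (sumR m y - sumR m x) by ring. auto. }
    assert (A3 : Rabs (sumR m (fun i => if Nat.leb 0 i then g i (y i) / alpha i else 0) -
                       sumR m (fun i => if Nat.leb 0 i then g i (x i) / alpha i else 0)) < eps / 2).
    { apply Hd2'; auto. intros i Hi. eapply Rlt_le_trans. apply Hc; auto. apply Rmin_l. }
    simpl in A3. apply Rabs_def2 in A2. apply Rabs_def2 in A3. lra.
  - exists xs. apply box_feasN in Hxs. split; auto.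
    intros j Hj y Hy. assert (Hjn : (j < n)%nat) by lia. pose proof (Halpha j Hjn).
    rewrite payoff_dev, payoff_at by auto.
    assert (Hu : box 0 m Q (update xs j y)) by (apply box_feasN, feasN_update; auto).
    specialize (Hmax _ Hu). unfold P in Hmax.
    rewrite sumR_update in Hmax by auto.
    rewrite (sumR_ext m (fun j0 => g j0 (update xs j y j0) / alpha j0)
      (update (fun j0 => g j0 (xs j0) / alpha j0) j (g j y / alpha j))) in Hmax.
    2:{ intros i Hi. unfold update. destruct (Nat.eqb_spec i j); subst; auto. }
    rewrite sumR_update in Hmax by auto. rewrite Sagg_dec.
    replace (sumR m xs - xs j + y + Tc xC) with (sumR m xs + Tc xC - xs j + y) in Hmax by ring.
    set (A := H (sumR m xs + Tc xC - xs j + y)) in *.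
    set (B := H (sumR m xs + Tc xC)) in *.
    assert (A - g j y / alpha j <= B - g j (xs j) / alpha j) by lra.
    apply Rmult_le_compat_l with (r := alpha j) in H1; [|lra].
    replace (alpha j * (A - g j y / alpha j)) with (alpha j * A - g j y) in H1 by (field; lra).
    replace (alpha j * (B - g j (xs j) / alpha j)) with (alpha j * B - g j (xs j)) in H1 by (field; lra).
    auto.
Qed.

Lemma notNE_open xC x : feasC n k Q xC -> box 0 m Q x -> ~ NE n k Q H alpha h g xC x ->
  exists d, 0 < d /\ forall y, box 0 m Q y -> close 0 m d x y -> ~ NE n k Q H alpha h g xC y.
Proof.
  intros HC Hx HnNE.
  assert (Hj : exists j, (j < m)%nat /\ ~ bset j (Sagg x xC) (x j)).
  { apply NNPP. intro Hno. apply HnNE. apply NE_iff; auto. split. apply box_feasN; auto.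
    intros j Hj. apply NNPP. intro Hb. apply Hno. exists j. auto. }
  destruct Hj as [j [Hj Hb]].
  assert (Hjn : (j < n)%nat) by (unfold m in *; lia). pose proof (Halpha j Hjn) as Haj.
  set (S := Sagg x xC) in *.
  assert (Hxj : 0 <= x j <= Q) by (apply Hx; lia).
  assert (Hcase : (0 < x j /\ alpha j * dH S < dg j (x j)) \/ (x j < Q /\ dg j (x j) < alpha j * dH S)).
  { apply NNPP. intro Hn. apply Hb. split; auto. split.
    - intros. apply Rnot_lt_le. intro. apply Hn. left. auto.
    - intros. apply Rnot_lt_le. intro. apply Hn. right. auto. }
  destruct Hcase as [[Hp Hgap]|[Hp Hgap]].
  - set (gam := dg j (x j) - alpha j * dH S).
    assert (Hgam : 0 < gam) by (unfold gam; lra).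
    destruct (Hdgc j Hjn (x j) Hxj (gam / 3)) as [d1 [Hd1 Hd1']]. lra.
    destruct (cont_pt_eps dH S (HdHc S) (gam / (3 * alpha j))) as [d2 [Hd2 Hd2']].
    apply Rdiv_lt_0_compat; lra.
    destruct (small_div d2 m Hd2) as [Hd3 Hd3'].
    exists (Rmin (x j) (Rmin d1 (d2 / (INR m + 1)))). split. repeat apply Rmin_glb_lt; auto.
    intros y Hy Hc HNEy. apply NE_iff in HNEy; auto. destruct HNEy as [_ Hby].
    destruct (Hby j Hj) as [_ [Hb1 _]].
    assert (Hc1 : Rabs (y j - x j) < x j) by (eapply Rlt_le_trans; [apply Hc; lia|apply Rmin_l]).
    assert (Hc2 : Rabs (y j - x j) < d1).
    { eapply Rlt_le_trans; [apply Hc; lia|]. eapply Rle_trans; [apply Rmin_r|apply Rmin_l]. }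
    assert (Hyj : 0 < y j) by (apply Rabs_def2 in Hc1; lra).
    specialize (Hb1 Hyj).
    assert (E1 : Rabs (dg j (y j) - dg j (x j)) < gam / 3) by (apply Hd1'; auto; apply Hy; lia).
    assert (E2 : Rabs (dH (Sagg y xC) - dH S) < gam / (3 * alpha j)).
    { apply Hd2'. unfold S. rewrite !Sagg_dec.
      replace (sumR m y + Tc xC - (sumR m x + Tc xC)) with (sumR m y - sumR m x) by ring.
      apply (sumR_close_eps m x y (Rmin (x j) (Rmin d1 (d2 / (INR m + 1))))).
      repeat apply Rmin_glb_lt; auto.
      eapply Rle_lt_trans; [|apply Hd3']. apply Rmult_le_compat_l. apply pos_INR.
      eapply Rle_trans; [apply Rmin_r|apply Rmin_r].
      intros i Hi. apply Hc. lia. }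
    apply Rabs_def2 in E1. apply Rabs_def2 in E2.
    assert (alpha j * dH (Sagg y xC) < alpha j * dH S + gam / 3).
    { assert (alpha j * (dH (Sagg y xC) - dH S) < alpha j * (gam / (3 * alpha j))) by (apply Rmult_lt_compat_l; lra).
      replace (alpha j * (gam / (3 * alpha j))) with (gam / 3) in H0 by (field; lra). lra. }
    unfold gam in *. lra.
  - set (gam := alpha j * dH S - dg j (x j)).
    assert (Hgam : 0 < gam) by (unfold gam; lra).
    destruct (Hdgc j Hjn (x j) Hxj (gam / 3)) as [d1 [Hd1 Hd1']]. lra.
    destruct (cont_pt_eps dH S (HdHc S) (gam / (3 * alpha j))) as [d2 [Hd2 Hd2']].
    apply Rdiv_lt_0_compat; lra.
    destruct (small_div d2 m Hd2) as [Hd3 Hd3'].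
    exists (Rmin (Q - x j) (Rmin d1 (d2 / (INR m + 1)))). split. repeat apply Rmin_glb_lt; auto; lra.
    intros y Hy Hc HNEy. apply NE_iff in HNEy; auto. destruct HNEy as [_ Hby].
    destruct (Hby j Hj) as [_ [_ Hb2]].
    assert (Hc1 : Rabs (y j - x j) < Q - x j) by (eapply Rlt_le_trans; [apply Hc; lia|apply Rmin_l]).
    assert (Hc2 : Rabs (y j - x j) < d1).
    { eapply Rlt_le_trans; [apply Hc; lia|]. eapply Rle_trans; [apply Rmin_r|apply Rmin_l]. }
    assert (Hyj : y j < Q) by (apply Rabs_def2 in Hc1; lra).
    specialize (Hb2 Hyj).
    assert (E1 : Rabs (dg j (y j) - dg j (x j)) < gam / 3) by (apply Hd1'; auto; apply Hy; lia).
    assert (E2 : Rabs (dH (Sagg y xC) - dH S) < gam / (3 * alpha j)).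
    { apply Hd2'. unfold S. rewrite !Sagg_dec.
      replace (sumR m y + Tc xC - (sumR m x + Tc xC)) with (sumR m y - sumR m x) by ring.
      apply (sumR_close_eps m x y (Rmin (Q - x j) (Rmin d1 (d2 / (INR m + 1))))).
      repeat apply Rmin_glb_lt; auto; lra.
      eapply Rle_lt_trans; [|apply Hd3']. apply Rmult_le_compat_l. apply pos_INR.
      eapply Rle_trans; [apply Rmin_r|apply Rmin_r].
      intros i Hi. apply Hc. lia. }
    apply Rabs_def2 in E1. apply Rabs_def2 in E2.
    assert (alpha j * dH S - gam / 3 < alpha j * dH (Sagg y xC)).
    { assert (alpha j * (- (gam / (3 * alpha j))) < alpha j * (dH (Sagg y xC) - dH S)) by (apply Rmult_lt_compat_l; lra).
      replace (alpha j * (- (gam / (3 * alpha j)))) with (- (gam / 3)) in H0 by (field; lra). lra. }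
    unfold gam in *. lra.
Qed.

Lemma minNE xC : feasC n k Q xC -> exists xN, NE n k Q H alpha h g xC xN /\
  forall xN', NE n k Q H alpha h g xC xN' -> sumR m xN <= sumR m xN'.
Proof.
  intros HC.
  set (f := fun x => if excluded_middle_informative (NE n k Q H alpha h g xC x)
                     then - sumR m x else - (INR m * Q + 1)).
  assert (Hbd : forall x, box 0 m Q x -> sumR m x <= INR m * Q).
  { intros. apply sumR_bound. intros; apply H0; lia. }
  assert (Hge : forall x, box 0 m Q x -> 0 <= sumR m x).
  { intros. apply sumR_ge0. intros; apply H0; lia. }
  destruct (CL 0 m Q f 0) as [xs [Hxs Hmax]].
  - lra.
  - intros x Hx. unfold f. destruct excluded_middle_informative. specialize (Hge x Hx); lra.
    pose proof (pos_INR m). nra.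
  - intros x Hx eps He. unfold f at 2. destruct (excluded_middle_informative (NE n k Q H alpha h g xC x)) as [HN|HN].
    + destruct (small_div eps m He) as [Hd Hd'].
      exists (eps / (INR m + 1)). split; auto. intros y Hy Hc. unfold f.
      destruct excluded_middle_informative.
      * assert (Rabs (sumR m y - sumR m x) < eps) by (apply (sumR_close_eps m x y (eps / (INR m + 1))); auto; intros; apply Hc; lia).
        apply Rabs_def2 in H0. lra.
      * specialize (Hbd x Hx). lra.
    + destruct (notNE_open xC x HC Hx HN) as [d [Hd Hd']]. exists d. split; auto.
      intros y Hy Hc. unfold f. destruct excluded_middle_informative. exfalso; eapply Hd'; eauto. lra.
  - destruct (NE_exists xC HC) as [xe Hxe].
    assert (Hxe' : box 0 m Q xe) by (apply box_feasN; apply Hxe).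
    assert (Hfe : f xe = - sumR m xe) by (unfold f; destruct excluded_middle_informative; tauto).
    assert (Hxs_NE : NE n k Q H alpha h g xC xs).
    { apply NNPP. intro Hn. specialize (Hmax xe Hxe'). unfold f at 2 in Hmax.
      destruct excluded_middle_informative; [tauto|]. rewrite Hfe in Hmax. specialize (Hbd xe Hxe'). lra. }
    exists xs. split; auto. intros xN' HN'.
    assert (Hb' : box 0 m Q xN') by (apply box_feasN; apply HN').
    specialize (Hmax xN' Hb'). unfold f in Hmax.
    destruct (excluded_middle_informative (NE n k Q H alpha h g xC xN')); [|tauto].
    destruct (excluded_middle_informative (NE n k Q H alpha h g xC xs)); [|tauto]. lra.
Qed.

Lemma struct_bound xC xC' xN xN' : feasC n k Q xC -> feasC n k Q xC' ->
  NE n k Q H alpha h g xC xN -> NE n k Q H alpha h g xC' xN' ->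
  (forall z, NE n k Q H alpha h g xC' z -> sumR m xN' <= sumR m z) ->
  Sagg xN' xC' <= Sagg xN xC + Rmax 0 (Tc xC' - Tc xC).
Proof.
  intros HC HC' HNE HNE' Hmin.
  set (S := Sagg xN xC). set (S' := Sagg xN' xC'). set (S2 := S + Rmax 0 (Tc xC' - Tc xC)).
  apply Rnot_lt_le. intro Hlt.
  pose proof (proj1 (NE_iff xC xN HC) HNE) as [HN Hb].
  pose proof (proj1 (NE_iff xC' xN' HC') HNE') as [HN' Hb'].
  assert (HR1 : 0 <= Rmax 0 (Tc xC' - Tc xC)) by apply Rmax_l.
  assert (HR2 : Tc xC' - Tc xC <= Rmax 0 (Tc xC' - Tc xC)) by apply Rmax_r.
  assert (HS : S = sumR m xN + Tc xC) by (unfold S; apply Sagg_dec).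
  assert (HS' : S' = sumR m xN' + Tc xC') by (unfold S'; apply Sagg_dec).
  destruct (MID S S2 S' xN xN' (S2 - Tc xC')) as [w [Hw Hsw]]; auto;
    try (unfold S2 in *; lra).
  - assert (HNEw : NE n k Q H alpha h g xC' w).
    { apply NE_iff; auto. split.
      - intros i Hi. apply Hw. auto.
      - intros j Hj. replace (Sagg w xC') with S2; auto. rewrite Sagg_dec. lra. }
    specialize (Hmin w HNEw). unfold S2 in *. lra.
Qed.

Lemma PCLE_exists : (1 <= k)%nat -> exists xN xC, PCLE n k Q H alpha h g xN xC.
Proof.
  intros Hk1.
  assert (Hch : forall xC, exists xN, feasC n k Q xC -> NE n k Q H alpha h g xC xN /\
     forall xN', NE n k Q H alpha h g xC xN' -> sumR m xN <= sumR m xN').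
  { intros xC. destruct (excluded_middle_informative (feasC n k Q xC)) as [HC|HC].
    - destruct (minNE xC HC) as [xN HxN]. exists xN. auto.
    - exists (fun _ => 0). tauto. }
  set (xNs := fun xC => proj1_sig (constructive_indefinite_description _ (Hch xC))).
  assert (HxNs : forall xC, feasC n k Q xC -> NE n k Q H alpha h g xC (xNs xC) /\
     forall xN', NE n k Q H alpha h g xC xN' -> sumR m (xNs xC) <= sumR m xN').
  { intros xC. unfold xNs. destruct (constructive_indefinite_description _ (Hch xC)); auto. }
  pose proof (Acoef_pos Hk1) as HA.
  set (f := fun xC => coopSum n k H alpha h g (xNs xC) xC).
  assert (Hf : forall xC, feasC n k Q xC -> f xC = Acoef * H (Sagg (xNs xC) xC) - Gc xC).
  { intros. unfold f. apply coopSum_eq; auto. apply (HxNs xC H0). }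
  destruct (CL m n Q f (Acoef * H (INR n * Q) - sumR n (fun i => if Nat.leb m i then g i 0 else 0)))
    as [xs [Hxs Hmax]].
  - lra.
  - intros x Hx. apply box_feasC in Hx. rewrite Hf by auto.
    destruct (HxNs x Hx) as [[HN _] _].
    assert (H (Sagg (xNs x) x) <= H (INR n * Q)).
    { apply H_mono. unfold Sagg. apply sumR_bound. intros. apply join_feas; auto. }
    assert (sumR n (fun i => if Nat.leb m i then g i 0 else 0) <= Gc x).
    { apply sumR_le. intros i Hi. destruct (Nat.leb_spec m i); [|lra].
      assert (0 <= x i <= Q) by (apply Hx; unfold m in *; lia).
      destruct (Req_dec (x i) 0) as [E|E]. rewrite E; lra. left; apply (Hginc i Hi); lra. }
    nra.
  - intros x Hx eps He. pose proof Hx as HxC. apply box_feasC in HxC.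
    set (S := Sagg (xNs x) x).
    destruct (dpl_cont H _ _ (HdH S) (eps / (2 * Acoef))) as [d1 [Hd1 Hd1']].
    apply Rdiv_lt_0_compat; lra.
    destruct (sum_cont m n Q g x) with (eps := eps / 2) as [d2 [Hd2 Hd2']].
    { intros i Hi e He'. apply (g_cont i (x i)); [lia | apply Hx; auto | auto]. }
    lra.
    destruct (small_div d1 n Hd1) as [Hd3 Hd3'].
    exists (Rmin d2 (d1 / (INR n + 1))). split. apply Rmin_glb_lt; auto.
    intros y Hy Hc. pose proof Hy as HyC. apply box_feasC in HyC.
    rewrite !Hf by auto.
    assert (HT : Rabs (Tc y - Tc x) < d1).
    { unfold Tc. apply (sumR_close_eps n _ _ (Rmin d2 (d1 / (INR n + 1)))).
      apply Rmin_glb_lt; auto.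
      eapply Rle_lt_trans; [|apply Hd3']. apply Rmult_le_compat_l. apply pos_INR. apply Rmin_r.
      intros i Hi. destruct (Nat.leb_spec m i). apply Hc. lia.
      rewrite Rminus_diag, Rabs_R0. apply Rmin_glb_lt; auto. }
    assert (HS : Sagg (xNs y) y <= S + Rmax 0 (Tc y - Tc x)).
    { apply struct_bound; auto; apply HxNs; auto. }
    assert (HR : Rmax 0 (Tc y - Tc x) < d1).
    { apply Rabs_def2 in HT. unfold Rmax. destruct Rle_dec; lra. }
    assert (HR0 : 0 <= Rmax 0 (Tc y - Tc x)) by apply Rmax_l.
    assert (E1 : H (Sagg (xNs y) y) <= H (S + Rmax 0 (Tc y - Tc x))) by (apply H_mono; auto).
    assert (E2 : Rabs (H (S + Rmax 0 (Tc y - Tc x)) - H S) < eps / (2 * Acoef)).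
    { apply Hd1'. replace (S + Rmax 0 (Tc y - Tc x) - S) with (Rmax 0 (Tc y - Tc x)) by ring.
      rewrite Rabs_right; lra. }
    assert (E3 : Rabs (Gc y - Gc x) < eps / 2).
    { apply Hd2'; auto. intros i Hi. eapply Rlt_le_trans; [apply Hc; auto|apply Rmin_l]. }
    apply Rabs_def2 in E2. apply Rabs_def2 in E3.
    assert (Acoef * H (Sagg (xNs y) y) <= Acoef * H S + eps / 2).
    { assert (Acoef * H (Sagg (xNs y) y) <= Acoef * (H S + eps / (2 * Acoef))) by nra.
      replace (Acoef * (H S + eps / (2 * Acoef))) with (Acoef * H S + eps / 2) in H0 by (field; lra). lra. }
    fold S. lra.
  - apply box_feasC in Hxs.
    exists (xNs xs), xs. split; auto. split.
    + apply NE_argmin_of; auto; apply HxNs; auto.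
    + intros xC' HC'. exists (xNs xC'). split.
      * apply NE_argmin_of; auto; apply HxNs; auto.
      * apply (Hmax xC'). apply box_feasC; auto.
Qed.

End Game.

Theorem proposition6 (n : nat) (Qbar : R) (H : R -> R) (alpha : nat -> R)
  (h g : nat -> R -> R) (k : nat) :
  (2 <= n)%nat ->
  0 < Qbar ->
  0 < alpha 0%nat ->
  (forall i, (S i < n)%nat -> alpha i <= alpha (S i)) ->
  regular n Qbar H h g ->
  (2 <= k <= n)%nat ->
  exists xN xC, PCLE n k Qbar H alpha h g xN xC.
Proof.
  intros Hn HQ Ha0 Hmono Hreg Hk.
  destruct Hreg as [Hh [[dH [HdH HdHc]] [HHinc [HHconc Hg]]]].
  assert (Halpha : forall i, (i < n)%nat -> 0 < alpha i).
  { induction i; intros Hi; auto. specialize (Hmono i Hi). specialize (IHi ltac:(lia)). lra. }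
  assert (Hch : forall i, exists df : R -> R, (i < n)%nat ->
    (forall x, 0 <= x <= Qbar -> has_derivative_within (g i) 0 Qbar x (df x)) /\
    (forall x, 0 <= x <= Qbar -> continuous_within df 0 Qbar x)).
  { intros i. destruct (excluded_middle_informative (i < n)%nat) as [Hi|Hi].
    - destruct (Hg i Hi) as [[df [H1 H2]] _]. exists df. auto.
    - exists (fun _ => 0). tauto. }
  set (dg := fun i => proj1_sig (constructive_indefinite_description _ (Hch i))).
  assert (Hdg : forall i, (i < n)%nat ->
    (forall x, 0 <= x <= Qbar -> has_derivative_within (g i) 0 Qbar x (dg i x)) /\
    (forall x, 0 <= x <= Qbar -> continuous_within (dg i) 0 Qbar x)).
  { intros i Hi. unfold dg. destruct (constructive_indefinite_description _ (Hch i)); simpl; auto. }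
  apply (PCLE_exists n k Qbar H alpha h g dH dg); auto; try lia.
  - intros i Hi. apply (proj1 (Hdg i Hi)).
  - intros i Hi. apply (proj2 (Hdg i Hi)).
  - intros i Hi. apply (Hg i Hi).
  - intros i Hi. apply (Hg i Hi).
Qed.
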